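(* Let $\mathcal{X}$ be a finite set and $\underline{Q}$ a lower transition rate operator on $\mathcal{L}(\mathcal{X})$. Then for all $A\subseteq\mathcal{X}$, all $x\in\mathcal{X}$ and all $t,s>0$: (1) if $x\in A$ then $\underline{T}_t\mathbb{I}_A(x)>0$; and $\underline{T}_t\mathbb{I}_A(x)>0\iff\underline{T}_s\mathbb{I}_A(x)>0$; (2) if $x\notin A$ then $\underline{T}_t\mathbb{I}_A(x)<1$; and $\underline{T}_t\mathbb{I}_A(x)<1\iff\underline{T}_s\mathbb{I}_A(x)<1$; (3) if $x\in A$ then $\overline{T}_t\mathbb{I}_A(x)>0$; and $\overline{T}_t\mathbb{I}_A(x)>0\iff\overline{T}_s\mathbb{I}_A(x)>0$; (4) if $x\notin A$ then $\overline{T}_t\mathbb{I}_A(x)<1$; and $\overline{T}_t\mathbb{I}_A(x)<1\iff\overline{T}_s\mathbb{I}_A(x)<1$.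
   Context: $\mathcal{L}(\mathcal{X})$ is the set of real-valued functions on $\mathcal{X}$ with pointwise operations and order, real constants identified with constant functions, $\mathbb{I}_A$ the indicator of $A$, $\mathbb{I}_y\coloneqq\mathbb{I}_{\{y\}}$. A lower transition rate operator is a map $\underline{Q}\colon\mathcal{L}(\mathcal{X})\to\mathcal{L}(\mathcal{X})$ such that for all $f,g$, $\lambda\ge0$, $\mu\in\mathbb{R}$, $x,y\in\mathcal{X}$: $\underline{Q}(\mu)=0$; $\underline{Q}(f+g)\ge\underline{Q}f+\underline{Q}g$; $\underline{Q}(\lambda f)=\lambda\underline{Q}f$; $x\ne y\Rightarrow\underline{Q}(\mathbb{I}_y)(x)\ge0$. For each $f$, $t\mapsto\underline{T}_tf$ is the unique solution on $[0,\infty)$ of $\frac{d}{dt}\underline{T}_tf=\underline{Q}\,\underline{T}_tf$ with $\underline{T}_0f=f$ (existence and uniqueness are known), and $\overline{T}_tf\coloneqq-\underline{T}_t(-f)$. *)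

(* Defs.v *)
From HB Require Import structures.
From mathcomp Require Import all_boot all_order all_algebra.
From mathcomp Require Import all_classical all_reals all_analysis.
Set Implicit Arguments. Unset Strict Implicit. Unset Printing Implicit Defensive.
Import Order.TTheory GRing.Theory Num.Theory.
Import numFieldNormedType.Exports.
Local Open Scope ring_scope.
Local Open Scope classical_set_scope.

Definition ind (R : realType) (X : finType) (A : {set X}) : X -> R :=
  fun z => if z \in A then 1 else 0.

Arguments ind R {X} A.

Definition lower_rate_op (R : realType) (X : finType)
    (Q : (X -> R) -> (X -> R)) : Prop :=
  [/\ (forall mu : R, Q (fun _ => mu) = (fun _ => 0)),
      (forall (f g : X -> R) (x : X), Q f x + Q g x <= Q (fun y => f y + g y) x),
      (forall (l : R) (f : X -> R), 0 <= l ->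
          Q (fun y => l * f y) = (fun y => l * Q f y)) &
      (forall x y : X, x != y -> 0 <= Q (ind R [set y]) x)].

(* T is the lower transition operator semigroup generated by Q:
   for every f, t |-> T t f is the solution on [0, +oo) of
   d/dt T_t f = Q (T_t f), T_0 f = f  (componentwise, X finite;
   at t = 0 the derivative is the right derivative).
   Values of T at negative times are irrelevant. *)
Definition lower_semigroup (R : realType) (X : finType)
    (Q : (X -> R) -> (X -> R)) (T : R -> (X -> R) -> (X -> R)) : Prop :=
  forall f : X -> R,
    [/\ T 0 f = f,
        (forall (x : X) (t : R), 0 < t ->
           derivable (fun u => T u f x) t 1 /\
           'D_1 (fun u => T u f x) t = Q (T t f) x) &
        (forall x : X,
           (fun h : R => h^-1 * (T h f x - f x)) @ 0^'+ --> Q (T 0 f) x)].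

Definition upper_of (R : realType) (X : finType)
    (T : R -> (X -> R) -> (X -> R)) (t : R) (f : X -> R) : X -> R :=
  fun x => - T t (fun y => - f y) x.

(* Main.v *)
Require Import Defs.
From HB Require Import structures.
From mathcomp Require Import all_boot all_order all_algebra.
From mathcomp Require Import all_classical all_reals all_analysis.
Import Order.TTheory GRing.Theory Num.Theory.
Import numFieldNormedType.Exports.
Local Open Scope ring_scope.
Set Implicit Arguments. Unset Strict Implicit. Unset Printing Implicit Defensive.
From mathcomp Require Import ring lra.
Definition goodP (R : realType) (X : finType) (P : (X -> R) -> (X -> R)) : Prop :=
 [/\ (forall g mu x, P (fun y => g y + mu) x = P g x),
     (forall g h x, (forall y, g y <= h y) -> g x = h x -> P g x <= P h x) &
     (forall l g x, 0 <= l -> P (fun y => l * g y) x = l * P g x)].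

Definition conjP (R : realType) (X : finType) (P : (X -> R) -> (X -> R)) :=
  fun g x => - P (fun y => - g y) x.

Lemma goodP_conj (R : realType) (X : finType) (P : (X -> R) -> (X -> R)) :
  goodP P -> goodP (conjP P).
Proof.
case=> Ps Pm Ph; split => [g mu x|g h x gh gx|l g x l0]; rewrite /conjP.
- rewrite -(Ps (fun y => - (g y + mu)) mu); congr (- P _ x).
  by apply: funext => y; rewrite opprD addrNK.
- rewrite lerN2; apply: Pm => [y|]; first by rewrite lerN2.
  by rewrite gx.
- rewrite mulrN -Ph //; congr (- P _ x).
  by apply: funext => y; rewrite mulrN.
Qed.

Lemma goodP_const (R : realType) (X : finType) (P : (X -> R) -> (X -> R)) :
  goodP P -> forall mu x, P (fun _ => mu) x = 0.
Proof.
case=> Ps Pm Ph mu x.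
have -> : (fun _ : X => mu) = (fun y => (fun _ : X => 0 * 0) y + mu).
  by apply: funext => y; rewrite mulr0 add0r.
by rewrite Ps (Ph 0 (fun _ => 0)) // mul0r.
Qed.
Lemma Q_super_sum (R : realType) (X : finType) (Q : (X -> R) -> (X -> R)) :
  lower_rate_op Q -> forall (s : seq X) (F : X -> X -> R) x,
  \sum_(y <- s) Q (F y) x <= Q (fun z => \sum_(y <- s) F y z) x.
Proof.
case=> Q0 Qa Qh Qp; elim=> [|a s IH] F x.
  rewrite big_nil.
  have -> : (fun z => \sum_(y <- [::]) F y z) = (fun _ => 0).
    by apply: funext => z; rewrite big_nil.
  by rewrite Q0.
rewrite big_cons.
have -> : (fun z => \sum_(y <- a :: s) F y z) =
          (fun z => F a z + (fun z => \sum_(y <- s) F y z) z).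
  by apply: funext => z; rewrite big_cons.
apply: le_trans (Qa _ _ _); exact: lerD.
Qed.

Lemma goodP_Q (R : realType) (X : finType) (Q : (X -> R) -> (X -> R)) :
  lower_rate_op Q -> goodP Q.
Proof.
move=> HQ; have [Q0 Qa Qh Qp] := HQ.
have Qs : forall g mu x, Q (fun y => g y + mu) x = Q g x.
  move=> g mu x; apply/eqP; rewrite eq_le; apply/andP; split.
    have -> : Q g x = Q (fun y => (fun y => g y + mu) y + (fun _ => - mu) y) x.
      by congr Q; apply: funext => y /=; rewrite addrK.
    apply: le_trans (Qa _ _ _); by rewrite Q0 addr0.
  by apply: le_trans (Qa _ _ _); rewrite Q0 addr0.
split => //.
- move=> g h x gh gx.
  pose d := fun y => h y - g y.
  have -> : h = (fun y => g y + d y) by apply: funext => y; rewrite /d addrC subrK.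
  apply: le_trans (Qa _ _ _); rewrite lerDl.
  have -> : d = (fun z => \sum_(y : X) d y * ind R [set y] z).
    apply: funext => z; rewrite (bigD1 z) //= big1 ?addr0.
      by rewrite /ind inE eqxx mulr1.
    by move=> y yz; rewrite /ind inE eq_sym (negbTE yz) mulr0.
  apply: le_trans (Q_super_sum HQ _ _ _).
  apply: sumr_ge0 => y _.
  rewrite Qh; last by rewrite /d subr_ge0.
  case: (eqVneq x y) => [<-|xy].
    by rewrite /d gx subrr mul0r.
  by apply: mulr_ge0; [rewrite /d subr_ge0 | exact: Qp].
- by move=> l g x l0; rewrite Qh.
Qed.
Local Open Scope classical_set_scope.
Lemma deriv_left_ge (R : realType) (g : R -> R) a c :
  derivable g a 1 -> (\forall h \near at_left 0, g (h + a) - g a <= c * h) ->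
  c <= 'D_1 g a.
Proof.
move=> dg H.
rewrite ['D_1 g a]cvg_at_leftE; last exact: dg.
apply: limr_ge.
  have dfc := dg; rewrite -(cvg_at_leftE (fun h => h^-1 *: ((g \o shift a) (h *: 1) - g a))) //.
  apply: cvg_trans dfc; apply: cvg_app.
  move=> A [e egt0 Ae]; exists e => // x xe xgt0; apply: Ae => //.
  exact/ltr0_neq0.
near=> h.
have hlt0 : h < 0 by near: h; exact: nbhs_left_lt.
have Hh : g (h + a) - g a <= c * h by near: h; exact: H.
rewrite /= [h%:A]mulr1 -subr_ge0.
have -> : h^-1 *: (g (h + a) - g a) - c = h^-1 * ((g (h + a) - g a) - c * h).
  by rewrite mulrBr [c * h]mulrC mulrA mulVf ?ltr0_neq0 // mul1r.
by apply: mulr_le0; [rewrite invr_le0 ltW | rewrite subr_le0].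
Unshelve. all: by end_near. Qed.

Lemma deriv_left_le (R : realType) (g : R -> R) a c :
  derivable g a 1 -> (\forall h \near at_left 0, c * h <= g (h + a) - g a) ->
  'D_1 g a <= c.
Proof.
move=> dg H.
rewrite ['D_1 g a]cvg_at_leftE; last exact: dg.
apply: limr_le.
  have dfc := dg; rewrite -(cvg_at_leftE (fun h => h^-1 *: ((g \o shift a) (h *: 1) - g a))) //.
  apply: cvg_trans dfc; apply: cvg_app.
  move=> A [e egt0 Ae]; exists e => // x xe xgt0; apply: Ae => //.
  exact/ltr0_neq0.
near=> h.
have hlt0 : h < 0 by near: h; exact: nbhs_left_lt.
have Hh : c * h <= g (h + a) - g a by near: h; exact: H.
rewrite /= [h%:A]mulr1 -subr_ge0.
have -> : c - h^-1 *: (g (h + a) - g a) = h^-1 * (c * h - (g (h + a) - g a)).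
  by rewrite mulrBr [c * h]mulrC mulrA mulVf ?ltr0_neq0 // mul1r.
by apply: mulr_le0; [rewrite invr_le0 ltW | rewrite subr_le0].
Unshelve. all: by end_near. Qed.

Definition sol (R : realType) (X : finType) (P : (X -> R) -> (X -> R))
  (u : R -> X -> R) (f : X -> R) : Prop :=
 [/\ forall y, u 0 y = f y,
     (forall x t, 0 < t -> derivable (fun r => u r x) t 1 /\
                  'D_1 (fun r => u r x) t = P (u t) x) &
     forall x, (fun r => u r x) @ at_right 0 --> f x].

Lemma sol_T (R : realType) (X : finType) (Q : (X -> R) -> (X -> R))
  (T : R -> (X -> R) -> (X -> R)) f :
  lower_semigroup Q T -> sol Q (fun r => T r f) f.
Proof.
move=> /(_ f) [T0 TD TR]; split => //.
- by move=> y; rewrite T0.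
move=> x.
have := TR x.
set q := (fun h : R => h^-1 * (T h f x - f x)) => Hq.
have H1 : (fun h : R => f x + h * q h) @ at_right 0 --> f x + 0 * Q (T 0 f) x.
  apply: cvgD; first exact: cvg_cst.
  apply: cvgM => //.
  apply: cvg_at_right_filter; exact: cvg_id.
rewrite mul0r addr0 in H1.
apply: cvg_trans H1; apply: near_eq_cvg; near=> h.
have h0 : 0 < h by near: h; exact: nbhs_right_gt.
by rewrite /q mulrA mulfV ?gt_eqF // mul1r addrC subrK.
Unshelve. all: by end_near. Qed.

Lemma sol_conj (R : realType) (X : finType) (P : (X -> R) -> (X -> R)) u f c :
  goodP P -> sol P u f ->
  sol (conjP P) (fun r y => c - u r y) (fun y => c - f y).
Proof.
move=> [Ps _ _] [S0 SD SR]; split.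
- by move=> y; rewrite S0.
- move=> x t t0; have [d D] := SD x t t0.
  have Hd : is_derive t 1 (fun r => u r x) (P (u t) x).
    by rewrite -D; exact: derivableP.
  have Hd2 : is_derive t 1 (fun r => c - u r x) (0 - P (u t) x).
    exact: (@is_deriveB _ _ _ (cst c) (fun r => u r x)).
  split; first exact: (@ex_derive _ _ _ _ _ _ _ Hd2).
  rewrite (@derive_val _ _ _ _ _ _ _ Hd2) /conjP sub0r; congr (- _).
  rewrite -(Ps (u t) (- c)); congr P; apply: funext => y.
  by rewrite opprB addrC.
- move=> x; apply: cvgB => //; exact: cvg_cst.
Qed.

Lemma sol_cont (R : realType) (X : finType) (P : (X -> R) -> (X -> R)) u f x (t : R) :
  sol P u f -> 0 < t -> (fun r => u r x) @ t --> u t x.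
Proof.
move=> [_ SD _] t0; have [d _] := SD x t t0.
exact/differentiable_continuous/derivable1_diffP.
Qed.

Lemma sol_rcont (R : realType) (X : finType) (P : (X -> R) -> (X -> R)) u f x (t : R) :
  sol P u f -> 0 <= t -> (fun r => u r x) @ at_right t --> u t x.
Proof.
move=> S; rewrite le_eqVlt => /orP[/eqP <-|t0].
  by case: S => S0 _ SR; rewrite S0; exact: SR.
by apply: cvg_at_right_filter; exact: sol_cont S t0.
Qed.
Lemma lin_cvg (R : realType) (e t0 t : R) :
  (fun s : R => e * (1 + (s - t0))) @ t --> e * (1 + (t - t0)).
Proof.
apply: cvgM; first exact: cvg_cst.
apply: cvgD; first exact: cvg_cst.
apply: cvgB; [exact: cvg_id | exact: cvg_cst].
Qed.

Lemma comparison (R : realType) (X : finType) (P : (X -> R) -> (X -> R)) u f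
  (w : X -> R) (t0 : R) :
  goodP P -> sol P u f -> 0 <= t0 -> (forall y, P w y <= 0) ->
  (forall y, u t0 y <= w y) -> forall r y, t0 <= r -> u r y <= w y.
Proof.
move=> GP S t00 Pw ut0 r x tr.
have [Ps Pm Ph] := GP.
have [S0 SD SR] := S.
rewrite leNgt; apply/negP => ltwx.
pose d := u r x - w x.
have d0 : 0 < d by rewrite /d subr_gt0.
have r1 : 0 < 1 + (r - t0) by rewrite ltr_pwDl // subr_ge0.
pose e := d / (2 * (1 + (r - t0))).
have e0 : 0 < e by rewrite /e divr_gt0 // mulr_gt0.
have ed : e * (1 + (r - t0)) < d.
  rewrite /e invfM -!mulrA mulVf ?gt_eqF // mulr1.
  by rewrite ltr_pdivrMr ?ltr_pMr ?ltr1n.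
pose b := fun (s : R) y => w y + e * (1 + (s - t0)).
pose Bad := [set s : R | t0 <= s /\ exists y, b s y <= u s y].
have Badr : Bad r.
  split => //; exists x; rewrite /b -lerBrDl; apply: ltW.
  by rewrite -/d.
have hlb : has_lbound Bad by exists t0 => s [].
have hinf : has_inf Bad by split => //; exists r.
pose tau := inf Bad.
have tauBad : forall s, Bad s -> tau <= s by move=> s Bs; exact: ge_inf.
have t0tau : t0 <= tau by apply: lb_le_inf; [exists r | move=> s []].
have before : forall s, t0 <= s -> s < tau -> forall y, u s y < b s y.
  move=> s t0s stau y; rewrite ltNge; apply/negP => H.
  by have := tauBad s (conj t0s (ex_intro _ y H)); rewrite leNgt stau.
have bcvg : forall y (s : R), b^~ y @ s --> b s y.
  by move=> y s; apply: cvgD; [exact: cvg_cst | exact: lin_cvg].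
have inBad : Bad tau.
  apply: contrapT => nB.
  have strict : forall y, u tau y < b tau y.
    move=> y; rewrite ltNge; apply/negP => H; apply: nB.
    by split => //; exists y.
  have Hn : \forall s \near at_right tau, forall y, u s y < b s y.
    apply: filter_forall => y.
    have : (fun s => b s y - u s y) @ at_right tau --> b tau y - u tau y.
      apply: cvgB; first exact/cvg_at_right_filter/bcvg.
      exact: (sol_rcont S (le_trans t00 t0tau)).
    move/cvgr_gt => /(_ 0); rewrite subr_gt0 => /(_ (strict y)).
    by apply: filterS => s; rewrite subr_gt0.
  case/nbhs_ballP: Hn => eta eta0 Heta.
  have [e' Be' lte'] := inf_adherent eta0 hinf.
  have := tauBad _ Be'; rewrite le_eqVlt => /orP[/eqP tau_e | tau_lt].
    by apply: nB; rewrite tau_e.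
  have H : forall y, u e' y < b e' y.
    apply: Heta => //.
    rewrite /ball /= distrC gtr0_norm ?subr_gt0 //.
    by rewrite ltrBlDl.
  case: Be' => _ [y Hy].
  by have := H y; rewrite ltNge Hy.
have t0ntau : t0 < tau.
  rewrite lt_neqAle t0tau andbT; apply/eqP => E.
  case: inBad; rewrite -E => _ [y Hy].
  have := ut0 y; move: Hy; rewrite /b subrr addr0 mulr1 => Hy Hy2.
  lra.
have tau0 : 0 < tau := le_lt_trans t00 t0ntau.
case: inBad => _ [y0 Hy0].
have le_all : forall z, u tau z <= b tau z.
  move=> z; rewrite leNgt; apply/negP => H.
  have Hc : (fun s => u s z - b s z) @ at_left tau --> u tau z - b tau z.
    apply: cvgB; first exact/cvg_at_left_filter/(sol_cont S tau0).
    exact/cvg_at_left_filter/bcvg.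
  have Hn : \forall s \near at_left tau, [/\ 0 < u s z - b s z, t0 < s & s < tau].
    near=> s; split; near: s.
    - by apply: (@cvgr_gt _ _ _ _ _ _ Hc); rewrite subr_gt0.
    - exact: nbhs_left_gt.
    - exact: nbhs_left_lt.
  have [s] := @filter_ex _ _ (at_left_proper_filter tau) _ Hn; case => Hs1 Hs2 Hs3.
  have := before s (ltW Hs2) Hs3 z.
  move: Hs1; rewrite subr_gt0 => Hs1 Hs4; lra.
have eq0 : u tau y0 = b tau y0 by apply/eqP; rewrite eq_le Hy0 le_all.
have Ptouch : P (u tau) y0 <= 0.
  apply: le_trans (Pw y0).
  have := Pm _ _ _ le_all eq0.
  by rewrite /b Ps.
have [dd DD] := SD y0 tau tau0.
have : e <= 'D_1 (fun s => u s y0) tau.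
  apply: deriv_left_ge => //.
  near=> h.
  have hlt : h < 0 by near: h; exact: nbhs_left_lt.
  have hgt : t0 - tau < h by near: h; apply: nbhs_left_gt; rewrite subr_lt0.
  have := before (h + tau) _ _ y0.
  have Hb : b (h + tau) y0 = b tau y0 + e * h by rewrite /b; ring.
  rewrite Hb -eq0 => K; have {}K := K _ _; lra.
rewrite DD => He; lra.
Unshelve. all: by end_near. Qed.
Lemma expK_derive (R : realType) (K r : R) :
  derivable (fun s : R => expR (K * s)) r 1 /\
  'D_1 (fun s : R => expR (K * s)) r = K * expR (K * r).
Proof.
have d1 : derivable (fun s : R => K * s) r 1.
  by apply: derivableM => //; exact: derivable_id.
split.
  apply/derivable1_diffP.
  apply: (@differentiable_comp _ _ _ _ (fun s : R => K * s) expR).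
    exact/derivable1_diffP.
  exact/derivable1_diffP/derivable_expR.
rewrite -derive1E.
rewrite (@derive1_comp _ (fun s : R => K * s) expR) //.
rewrite derive1Ml // derive1_id mulr1 mulrC.
by rewrite derive1E; have /funeqP -> := @derive_expR R.
Qed.

Lemma persistence (R : realType) (X : finType) (P : (X -> R) -> (X -> R)) u f x
  (a b : R) :
  goodP P -> sol P u f -> (forall r y, 0 <= r -> 0 <= u r y) ->
  0 < a -> a <= b -> 0 < u a x -> 0 < u b x.
Proof.
move=> [Ps Pm Ph] S pos a0 ab ua.
have [S0 SD SR] := S.
pose I := fun z : X => if z == x then (1:R) else 0.
pose K := `|P I x|.
have low : forall r, 0 < r -> - K * u r x <= P (u r) x.
  move=> r r0.
  have H1 : P (fun z => u r x * I z) x <= P (u r) x.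
    apply: Pm => [z|]; rewrite /I; last by rewrite eqxx mulr1.
    case: eqP => [->|_]; rewrite ?mulr1 ?mulr0 //; exact: pos (ltW r0).
  apply: le_trans H1; rewrite Ph; last exact: pos (ltW r0).
  rewrite mulrC; apply: ler_wpM2l; first exact: pos (ltW r0).
  by rewrite lerNl /K -normrN; exact: ler_norm.
pose F := (fun s : R => expR (K * s)) * (fun s => u s x).
have Fd : forall r, 0 < r -> derivable F r 1.
  move=> r r0; apply: derivableM; first by have [] := expK_derive K r.
  by have [] := SD x r r0.
have key : F a <= F b.
  apply: (@ger0_derive1_ndecr _ F a b) => //.
  - move=> r; rewrite in_itv /= => /andP[ar _]; exact: Fd (lt_trans a0 ar).
  - move=> r; rewrite in_itv /= => /andP[ar _].
    have r0 := lt_trans a0 ar.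
    have [e1 e2] := expK_derive K r.
    have [d1 d2] := SD x r r0.
    rewrite derive1E deriveM // e2 d2.
    have := low r r0; have := expR_gt0 (K * r).
    set E := expR (K * r); set U := u r x; set Pu := P (u r) x => E0 H.
    rewrite /GRing.scale /=.
    have -> : E * Pu + U * (K * E) = E * (Pu + K * U) by ring.
    by apply: mulr_ge0; [exact: ltW | lra].
  - apply: derivable_within_continuous => r; rewrite in_itv /= => /andP[ar _].
    exact: Fd (lt_le_trans a0 ar).
have Fa : 0 < F a by rewrite /F /= mulr_gt0 // expR_gt0.
have := lt_le_trans Fa key; rewrite /F /=.
by rewrite pmulr_rgt0 // expR_gt0.
Qed.
Lemma seq_min_pos (R : realType) (X : finType) (F : X -> R) (p : pred X)
  (s : seq X) : (forall z, p z -> 0 < F z) ->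
  exists2 m : R, 0 < m & forall z, z \in s -> p z -> m <= F z.
Proof.
move=> Fp; elim: s => [|a s [m m0 Hm]]; first by exists 1.
case pa: (p a).
  exists (Num.min m (F a)); first by rewrite lt_min m0 Fp.
  move=> z; rewrite inE => /orP[/eqP -> _|zs pz]; rewrite ge_min.
    by rewrite lexx orbT.
  by rewrite Hm.
exists m => // z; rewrite inE => /orP[/eqP -> |zs pz]; last exact: Hm.
by rewrite pa.
Qed.

Lemma zero_persist (R : realType) (X : finType) (P : (X -> R) -> (X -> R)) u f x
  (a b : R) :
  goodP P -> sol P u f -> (forall r y, 0 <= r -> 0 <= u r y) ->
  (forall r y, 0 <= r -> u r y <= 1) ->
  0 < a -> a <= b -> u a x = 0 -> u b x = 0.
Proof.
move=> GP S pos le1 a0 ab uax.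
have [Ps Pm Ph] := GP.
have [S0 SD SR] := S.
pose c := fun z => if u a z == 0 then (0:R) else 1.
have Pc : forall y, P c y <= 0.
  move=> y; case: (eqVneq (u a y) 0) => uay.
  - have zb : forall s, 0 < s -> s <= a -> u s y = 0.
      move=> s s0 sa; apply/eqP; rewrite eq_le (pos s y (ltW s0)) andbT leNgt.
      apply/negP => H; have := persistence GP S pos s0 sa H.
      by rewrite uay ltxx.
    have Pua : P (u a) y <= 0.
      have [d1 d2] := SD y a a0; rewrite -d2.
      apply: deriv_left_le => //; near=> h.
      have hlt : h < 0 by near: h; exact: nbhs_left_lt.
      have hgt : - a < h by near: h; apply: nbhs_left_gt; rewrite oppr_lt0.
      rewrite zb ?uay ?mul0r ?subrr //; first by rewrite -ltrBlDr sub0r.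
      by rewrite gerDr ltW.
    have upos : forall z, u a z != 0 -> 0 < u a z.
      by move=> z nz; rewrite lt_def nz pos // ltW.
    have [m m0 Hm] := @seq_min_pos R X (u a) (fun z => u a z != 0) (enum X) upos.
    have Ht : P (fun z => m * c z) y <= P (u a) y.
      apply: Pm => [z|]; last by rewrite /c uay eqxx mulr0.
      rewrite /c; case: eqP => [->|/eqP nz]; first by rewrite mulr0.
      by rewrite mulr1 Hm // mem_enum.
    move: Ht; rewrite Ph; last exact: ltW.
    move=> Ht.
    have := le_trans Ht Pua.
    by move=> H; rewrite -(pmulr_rle0 _ m0).
  - apply: le_trans (_ : P (fun _ => 1) y <= 0).
      apply: Pm => [z|]; last by rewrite /c (negbTE uay).
      by rewrite /c; case: ifP.
    by rewrite (goodP_const GP).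
have uc : forall z, u a z <= c z.
  by move=> z; rewrite /c; case: eqP => [->//|_]; exact: le1 (ltW a0).
have := comparison GP S (ltW a0) Pc uc x ab; rewrite /c uax eqxx => H.
apply/eqP; rewrite eq_le H pos // (le_trans (ltW a0) ab).
Unshelve. all: by end_near. Qed.
Lemma generic (R : realType) (X : finType) (P : (X -> R) -> (X -> R)) u f x
  (t s : R) :
  goodP P -> sol P u f -> (forall y, 0 <= f y <= 1) -> 0 < t -> 0 < s ->
  (0 < f x -> 0 < u t x) /\ (0 < u t x <-> 0 < u s x).
Proof.
move=> GP S f01 t0 s0.
have [S0 SD SR] := S.
have pos : forall r y, 0 <= r -> 0 <= u r y.
  move=> r y r0.
  have S' := sol_conj 0 GP S.
  have Pw : forall y, conjP P (fun _ => 0) y <= 0.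
    by move=> z; rewrite (goodP_const (goodP_conj GP)).
  have h0 : forall z, (fun r z => 0 - u r z) 0 z <= (fun _ => 0) z.
    by move=> z /=; rewrite S0 sub0r oppr_le0; have /andP[] := f01 z.
  have := @comparison R X (conjP P) _ _ (fun _ => 0) 0 (goodP_conj GP) S' (lexx 0) Pw h0 r y r0.
  by rewrite sub0r oppr_le0.
have le1 : forall r y, 0 <= r -> u r y <= 1.
  move=> r y r0.
  have Pw : forall y, P (fun _ => 1) y <= 0.
    by move=> z; rewrite (goodP_const GP).
  have h0 : forall z, u 0 z <= (fun _ => 1) z.
    by move=> z /=; rewrite S0; have /andP[] := f01 z.
  exact: (@comparison R X P u f (fun _ => 1) 0 GP S (lexx 0) Pw h0 r y r0).
have step : forall a b, 0 < a -> a <= b -> (0 < u a x <-> 0 < u b x).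
  move=> a b a0 ab; split; first exact: persistence GP S pos a0 ab.
  move=> H; rewrite lt_def pos ?ltW // andbT; apply/negP => /eqP E.
  have := zero_persist GP S pos le1 a0 ab E.
  by move=> E2; move: H; rewrite E2 ltxx.
split.
  move=> fx.
  have Hn : \forall r \near at_right 0, [/\ 0 < u r x, r < t & 0 < r].
    near=> r; split; near: r; [|exact: nbhs_right_lt| exact: nbhs_right_gt].
    exact: (@cvgr_gt _ _ _ _ _ _ (SR x)).
  have [r] := @filter_ex _ _ (at_right_proper_filter 0) _ Hn; case => ur rt r0.
  exact: (step r t r0 (ltW rt)).1.
case: (leP t s) => ts; first exact: step.
by apply: iff_sym; apply: step => //; exact: ltW.
Unshelve. all: by end_near. Qed.
Local Close Scope classical_set_scope.
Unset Implicit Arguments.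
Theorem corollary3 (R : realType) (X : finType)
    (Q : (X -> R) -> (X -> R)) (T : R -> (X -> R) -> (X -> R)) :
  lower_rate_op Q -> lower_semigroup Q T ->
  forall (A : {set X}) (x : X) (t s : R), 0 < t -> 0 < s ->
  [/\ (x \in A -> 0 < T t (ind R A) x) /\
        (0 < T t (ind R A) x <-> 0 < T s (ind R A) x),
      (x \notin A -> T t (ind R A) x < 1) /\
        (T t (ind R A) x < 1 <-> T s (ind R A) x < 1),
      (x \in A -> 0 < upper_of T t (ind R A) x) /\
        (0 < upper_of T t (ind R A) x <-> 0 < upper_of T s (ind R A) x) &
      (x \notin A -> upper_of T t (ind R A) x < 1) /\
        (upper_of T t (ind R A) x < 1 <-> upper_of T s (ind R A) x < 1)].
Proof.
move=> HQ HT A x t s t0 s0.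
have GQ := goodP_Q HQ.
have GQ' := goodP_conj GQ.
have GQ'' := goodP_conj GQ'.
have i01 : forall y, 0 <= ind R A y <= 1.
  by move=> y; rewrite /ind; case: ifP => _; rewrite ?lexx ?ler01.
have S1 := sol_T (ind R A) HT.
have S2 := sol_conj 1 GQ S1.
pose g := fun y => - ind R A y.
have S3 := sol_conj 0 GQ (sol_T g HT).
have S4 := sol_conj 1 GQ' S3.
have [G1a G1b] := generic x GQ S1 i01 t0 s0.
have f2 : forall y, 0 <= 1 - ind R A y <= 1.
  move=> y; have /andP[a b] := i01 y.
  by apply/andP; split; [rewrite subr_ge0 | rewrite lerBlDr lerDl].
have [G2a G2b] := generic x GQ' S2 f2 t0 s0.
have f3 : forall y, 0 <= 0 - g y <= 1 by move=> y; rewrite /g sub0r opprK.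
have [G3a G3b] := generic x GQ' S3 f3 t0 s0.
have f4 : forall y, 0 <= 1 - (0 - g y) <= 1.
  move=> y; rewrite /g sub0r opprK; exact: f2.
have [G4a G4b] := generic x GQ'' S4 f4 t0 s0.
have E : forall r, upper_of T r (ind R A) x = 0 - T r g x.
  by move=> r; rewrite /upper_of sub0r.
have ltE : forall a : R, (a < 1) <-> (0 < 1 - a) by move=> a; rewrite subr_gt0.
split.
- split; last exact: G1b.
  by move=> xA; apply: G1a; rewrite /ind xA ltr01.
- split.
    move=> xA; apply/ltE; apply: G2a.
    by rewrite /ind (negbTE xA) subr0 ltr01.
  by rewrite !ltE.
- rewrite !E; split; last exact: G3b.
  by move=> xA; apply: G3a; rewrite /g sub0r opprK /ind xA ltr01.
- rewrite !E; split.
    move=> xA; apply/ltE; apply: G4a.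
    by rewrite /g sub0r opprK /ind (negbTE xA) subr0 ltr01.
  by rewrite !ltE.
Qed.
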